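(* In the two-project discovery model described in the context, let $\mu_1=-\mu<0\le c\mu=\mu_2$ with $\mu>0$ and $c\in[0,1)$, and let $\sigma_1<\sigma_2$. Define $$c^*:=\frac{\rho\sigma_2}{\sigma_1+2\rho\sigma_2},\qquad c^{**}:=\frac{\sigma_2}{\rho\sigma_1+2\sigma_2}.$$ Then: 1. For any $c\in(c^*,c^{**})$ there exists $\underline{\mu}$ such that discovering project 1 is better than discovering project 2 for all $\mu>\underline{\mu}$. 2. For any $c\in(c^{**},1)$ there exists $\bar\mu$ such that discovering project 2 is better than discovering project 1 for all $\mu>\bar\mu$.
   Context: Model. There are two projects $i\in\{1,2\}$. The agent's values $v=(v_1,v_2)\in\mathbb{R}^2$ are drawn from a common prior that is bivariate normal with means $\mu_1,\mu_2$, standard deviations $\sigma_1,\sigma_2>0$ and correlation $\rho\in(0,1)$. The principal has weights $w_1,w_2\in[0,1]$ with $w_1+w_2=1$. Timing: (1) the principal chooses whether to publicly discover $v_1$, $v_2$, or neither; (2) the chosen value is publicly revealed and the agent forms a posterior by Bayes' rule; (3) knowing the revealed value, the principal proposes a subset $S\subseteq\{1,2\}$; (4) the agent approves iff $\sum_{i\in S}\mathbb{E}[v_i\mid\text{revealed information}]\ge 0$; (5) the principal receives $\sum_{i\in S}w_i$ if approved and $0$ otherwise. The principal chooses the proposal to maximize her payoff given the revealed information; ''better'' means strictly higher ex-ante expected payoff for the principal. *)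

(* Defs.v *)
From HB Require Import structures.
From mathcomp Require Import all_boot all_order all_algebra.
From mathcomp Require Import all_classical all_reals all_analysis.
Set Implicit Arguments. Unset Strict Implicit. Unset Printing Implicit Defensive.
Import Order.TTheory GRing.Theory Num.Theory.
Local Open Scope ring_scope.

Section DiscoveryModel.
Context {R : realType}.

(* A proposal S ⊆ {1,2} is encoded by two booleans (s1, s2): i ∈ S iff s_i.
   a1, a2 are the agent's posterior means E[v_i | revealed information]. *)
Definition approves (a1 a2 : R) (s1 s2 : bool) : bool :=
  0 <= (if s1 then a1 else 0) + (if s2 then a2 else 0).

Definition proposal_payoff (w1 w2 a1 a2 : R) (s1 s2 : bool) : R :=
  if approves a1 a2 s1 s2 then (if s1 then w1 else 0) + (if s2 then w2 else 0)
  else 0.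

Definition principal_value (w1 w2 a1 a2 : R) : R :=
  Num.max (Num.max (proposal_payoff w1 w2 a1 a2 false false)
                   (proposal_payoff w1 w2 a1 a2 true false))
          (Num.max (proposal_payoff w1 w2 a1 a2 false true)
                   (proposal_payoff w1 w2 a1 a2 true true)).

(* Bayes posterior mean of v_j given v_i = x, for the bivariate normal prior
   with means mu_i, mu_j, std devs sig_i, sig_j and correlation rho. *)
Definition posterior_mean_other (mu_i sig_i mu_j sig_j rho x : R) : R :=
  mu_j + rho * (sig_j / sig_i) * (x - mu_i).

(* Ex-ante expected payoff of discovering v_1: v_1 ~ N(mu1, sig1^2) (its prior
   marginal); after seeing v_1 = x the posterior means are (x, E[v_2 | x]). *)
Definition payoff_discover1 (mu1 mu2 sig1 sig2 rho w1 w2 : R) : \bar R :=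
  (\int[normal_prob mu1 sig1]_x
     (principal_value w1 w2 x (posterior_mean_other mu1 sig1 mu2 sig2 rho x))%:E)%E.

Definition payoff_discover2 (mu1 mu2 sig1 sig2 rho w1 w2 : R) : \bar R :=
  (\int[normal_prob mu2 sig2]_y
     (principal_value w1 w2 (posterior_mean_other mu2 sig2 mu1 sig1 rho y) y)%:E)%E.

Definition c_star (sig1 sig2 rho : R) : R := rho * sig2 / (sig1 + 2 * rho * sig2).
Definition c_starstar (sig1 sig2 rho : R) : R := sig2 / (rho * sig1 + 2 * sig2).

End DiscoveryModel.

(* Main.v *)
Require Import Defs.
From HB Require Import structures.
From mathcomp Require Import all_boot all_order all_algebra.
From mathcomp Require Import all_classical all_reals all_analysis.
From mathcomp Require Import measurable_realfun.
From mathcomp Require Import ring lra.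
Import Order.TTheory GRing.Theory Num.Theory.
Local Open Scope classical_set_scope.
Local Open Scope ring_scope.

Section H.
Context {R : realType}.
Lemma pdf_eq (m s x : R) : 0 < s ->
  normal_pdf m s x = normal_peak s * expR (- (x - m) ^+ 2 / (s ^+ 2 *+ 2)).
Proof. by move=> s0; rewrite normal_pdfE ?gt_eqF. Qed.

Lemma mpdf (m s : R) (A : set R) :
  measurable_fun A (fun x => (normal_pdf m s x)%:E).
Proof.
apply: measurable_funTS; apply/measurable_EFinP.
exact: measurable_normal_pdf.
Qed.

Lemma tail_ub (m m' s d : R) (A : set R) : 0 < s -> measurable A ->
  (forall x, A x -> (x - m') ^+ 2 + d ^+ 2 <= (x - m) ^+ 2) ->
  (normal_prob m s A <= (expR (- d ^+ 2 / (s ^+ 2 *+ 2)))%:E)%E.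
Proof.
move=> s0 mA H.
set K := expR _.
have K0 : 0 <= K by exact: expR_ge0.
apply: (@le_trans _ _ (\int[lebesgue_measure]_(x in A) (K%:E * (normal_pdf m' s x)%:E))%E).
  rewrite /normal_prob; apply: ge0_le_integral => //.
  - by move=> x _; rewrite lee_fin normal_pdf_ge0.
  - exact: mpdf.
  - apply: emeasurable_funM => //; exact: mpdf.
  move=> x Ax; rewrite -EFinM lee_fin !pdf_eq // mulrCA ler_wpM2l ?normal_peak_ge0 //.
  rewrite /K -expRD ler_expR.
  have S : 0 < s ^+ 2 *+ 2 by rewrite pmulrn_lgt0 // exprn_gt0.
  rewrite !mulNr -opprD lerN2 -mulrDl ler_pM2r ?invr_gt0 //.
  by rewrite addrC; exact: H.
rewrite ge0_integralZl_EFin //; last 2 first.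
  - by move=> x _; rewrite lee_fin normal_pdf_ge0.
  - exact: mpdf.
rewrite -[X in (_ <= X)%E]mule1 lee_pmul2l ?lte_fin ?expR_gt0 //.
exact: (probability_le1 (normal_prob m' s) mA).
Qed.

Lemma tail_lb (m s a D : R) (A : set R) : 0 < s -> measurable A ->
  `[a, a + 1] `<=` A ->
  (forall x, a <= x -> x <= a + 1 -> (x - m) ^+ 2 <= D ^+ 2) ->
  ((normal_peak s * expR (- D ^+ 2 / (s ^+ 2 *+ 2)))%:E <= normal_prob m s A)%E.
Proof.
move=> s0 mA sub H.
apply: (@le_trans _ _ (normal_prob m s `[a, a + 1])); last first.
  by apply: le_measure => //; rewrite inE //.
set L := normal_peak s * _.
have -> : L%:E = (\int[lebesgue_measure]_(x in `[a, (a + 1)%R]) (cst L%:E x))%E.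
  rewrite integral_cst //= lebesgue_measure_itv /= lte_fin ltrDl ltr01.
  by rewrite -EFinD addrAC subrr add0r mule1.
rewrite /normal_prob; apply: ge0_le_integral => //.
- by move=> x _; rewrite lee_fin mulr_ge0 ?normal_peak_ge0 ?expR_ge0.
- exact: mpdf.
move=> x /=; rewrite in_itv /= => /andP[h1 h2].
rewrite lee_fin pdf_eq // ler_wpM2l ?normal_peak_ge0 // ler_expR.
have S : 0 < s ^+ 2 *+ 2 by rewrite pmulrn_lgt0 // exprn_gt0.
rewrite !mulNr lerN2 ler_pM2r ?invr_gt0 //.
exact: H.
Qed.
Lemma max4 (a b c d t : R) : a <= t -> b <= t -> c <= t -> d <= t ->
  (a = t \/ b = t \/ c = t \/ d = t) -> Num.max (Num.max a b) (Num.max c d) = t.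
Proof.
move=> ha hb hc hd H; apply/eqP; rewrite eq_le !ge_max ha hb hc hd /= !le_max.
by case: H => [->|[->|[->|->]]]; rewrite lexx ?orbT.
Qed.

Lemma pv_eq (w1 w2 u v : R) : 0 <= w1 -> 0 <= w2 -> w1 + w2 = 1 -> (0 <= u -> 0 <= v) ->
 principal_value w1 w2 u v = (if 0 <= v then w2 else 0) + (if 0 <= u + v then w1 else 0).
Proof.
move=> h1 h2 hw huv.
rewrite /principal_value /proposal_payoff /approves /= !add0r !addr0 lexx.
have [hv|hv] := lerP 0 v; have [hs|hs] := lerP 0 (u+v); have [hu|hu] := lerP 0 u;
  apply: max4; try lra.
all: try (have := huv hu; lra).
Qed.

Lemma int_step (m s w1 w2 : R) (f g : R -> R) : 0 <= w1 -> 0 <= w2 ->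
  measurable [set x | 0 <= f x] -> measurable [set x | 0 <= g x] ->
  (\int[normal_prob m s]_x ((if (0 <= f x)%R then w2 else 0) + (if (0 <= g x)%R then w1 else 0))%R%:E
   = w2%:E * normal_prob m s [set x | (0 <= f x)%R] + w1%:E * normal_prob m s [set x | (0 <= g x)%R])%E.
Proof.
move=> h1 h2 mA mB.
set A := [set x | 0 <= f x]; set B := [set x | 0 <= g x].
have eA x : (x \in A) = (0 <= f x) by apply/idP/idP => [/set_mem|/mem_set].
have eB x : (x \in B) = (0 <= g x) by apply/idP/idP => [/set_mem|/mem_set].
transitivity (\int[normal_prob m s]_x ((w2 * \1_A x)%:E + (w1 * \1_B x)%:E))%E.
  apply: eq_integral => x _; rewrite !indicE eA eB -EFinD.
  by case: (0 <= f x); case: (0 <= g x); rewrite ?mulr1 ?mulr0.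
rewrite ge0_integralD //; first last.
- apply/measurable_EFinP; apply: measurable_funM => //; exact: measurable_indic.
- by move=> x _; rewrite lee_fin mulr_ge0.
- apply/measurable_EFinP; apply: measurable_funM => //; exact: measurable_indic.
- by move=> x _; rewrite lee_fin mulr_ge0.
under eq_integral do rewrite EFinM.
under [X in (_ + X)%E]eq_integral do rewrite EFinM.
rewrite !ge0_integralZl_EFin //; try (by move=> x _; rewrite lee_fin);
  try (apply/measurable_EFinP; exact: measurable_indic).
by rewrite !integral_indic // !setIT.
Qed.

Lemma sq_div (d s : R) : 0 < s -> - d ^+ 2 / (s ^+ 2 *+ 2) = - (d / s) ^+ 2 / 2.
Proof. move=> s0; rewrite -mulr_natr; field; rewrite gt_eqF //. Qed.

Lemma ub_right (m s d : R) (A : set R) : 0 < s -> measurable A -> 0 <= d ->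
  (forall x, A x -> m + d <= x) ->
  (normal_prob m s A <= (expR (- (d / s) ^+ 2 / 2))%:E)%E.
Proof.
move=> s0 mA d0 H; rewrite -sq_div //; apply: (tail_ub m (m + d) s d A) => // x /H hx.
nra.
Qed.

Lemma ub_left (m s d : R) (A : set R) : 0 < s -> measurable A -> 0 <= d ->
  (forall x, A x -> x <= m - d) ->
  (normal_prob m s A <= (expR (- (d / s) ^+ 2 / 2))%:E)%E.
Proof.
move=> s0 mA d0 H; rewrite -sq_div //; apply: (tail_ub m (m - d) s d A) => // x /H hx.
nra.
Qed.

Lemma lb_right (m s d : R) (A : set R) : 0 < s -> measurable A -> 0 <= d ->
  (forall x, m + d <= x -> A x) ->
  ((normal_peak s * expR (- ((d + 1) / s) ^+ 2 / 2))%:E <= normal_prob m s A)%E.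
Proof.
move=> s0 mA d0 H; rewrite -sq_div //; apply: (tail_lb m s (m + d)) => //.
  by move=> x /=; rewrite in_itv /= => /andP[h _]; exact: H.
move=> x h1 h2; nra.
Qed.

Lemma lb_left (m s d : R) (A : set R) : 0 < s -> measurable A -> 0 <= d ->
  (forall x, x <= m - d -> A x) ->
  ((normal_peak s * expR (- ((d + 1) / s) ^+ 2 / 2))%:E <= normal_prob m s A)%E.
Proof.
move=> s0 mA d0 H; rewrite -sq_div //; apply: (tail_lb m s (m - d - 1)) => //.
  by move=> x /=; rewrite in_itv /= => /andP[_ h]; apply: H; lra.
move=> x h1 h2; nra.
Qed.

Lemma meas_ge0 (f : R -> R) : measurable_fun setT f -> measurable [set x | 0 <= f x].
Proof.
move=> mf; have := mf measurableT `[0, +oo[%classic (measurable_itv _).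
rewrite setTI; congr measurable; apply/seteqP; split => x /=; rewrite in_itv /= andbT //.
Qed.

Lemma prob_real (m s : R) (A : set R) : measurable A ->
  exists p, normal_prob m s A = p%:E /\ 0 <= p <= 1 /\ normal_prob m s (~` A) = (1 - p)%:E.
Proof.
move=> mA.
have h0 : (0 <= normal_prob m s A)%E by exact: measure_ge0.
have h1 : (normal_prob m s A <= 1)%E by exact: probability_le1.
have fA : normal_prob m s A \is a fin_num by rewrite ge0_fin_numE // (le_lt_trans h1) // ltry.
exists (fine (normal_prob m s A)); split; first by rewrite fineK.
split; first by rewrite -lee_fin -(lee_fin _ 1) fineK // h0 h1.
by rewrite probability_setC // EFinB fineK.
Qed.

Lemma asym (g1 g2 h K1 K2 : R) : 0 <= g2 -> g2 < g1 -> 0 < K2 -> 0 <= K1 ->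
  exists M, forall mu, M < mu ->
    K1 * expR (- (g1 * mu) ^+ 2 / 2) < K2 * expR (- (g2 * mu + h) ^+ 2 / 2).
Proof.
move=> g20 g21 K20 K10.
have [->|K1n0] := eqVneq K1 0.
  by exists 0 => mu _; rewrite mul0r mulr_gt0 // expR_gt0.
have K1p : 0 < K1 by rewrite lt_neqAle eq_sym K1n0.
set G := ln (K2 / K1).
set D := g1 ^+ 2 - g2 ^+ 2.
have D0 : 0 < D by rewrite /D; nra.
set T := 2 * `|g2 * h| + h ^+ 2 + 2 * `|G| + 1.
have T0 : 0 < T by rewrite /T; have := normr_ge0 (g2 * h); have := normr_ge0 G; have := sqr_ge0 h; lra.
exists (1 + T / D) => mu hmu.
have TD : 0 < T / D by exact: divr_gt0.
have mu1 : 1 < mu by lra.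
have hDm : T < D * (mu - 1).
  have : T / D < mu - 1 by lra.
  by rewrite ltr_pdivrMr // mulrC.
have hn1 : g2 * h * mu <= `|g2 * h| * mu by rewrite ler_wpM2r ?ler_norm //; lra.
have hn2 : - `|G| <= G by rewrite lerNl -normrN ler_norm.
have hTm : T * mu < D * mu * mu.
  have : T < D * mu by lra.
  move=> hh; rewrite ltr_pM2r //; lra.
have key : - (g1 * mu) ^+ 2 / 2 < G + - (g2 * mu + h) ^+ 2 / 2.
  have hT1 : h ^+ 2 + 2 * `|G| + 1 <= (h ^+ 2 + 2 * `|G| + 1) * mu.
    have : 0 <= (h ^+ 2 + 2 * `|G| + 1) * (mu - 1).
      by apply: mulr_ge0; [have := sqr_ge0 h; have := normr_ge0 G; lra | lra].
    lra.
  rewrite /D /T in hTm hT1; lra.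
apply: (@lt_le_trans _ _ (K1 * expR (G + - (g2 * mu + h) ^+ 2 / 2))).
  by rewrite ltr_pM2l // ltr_expR.
rewrite expRD mulrA /G lnK ?posrE ?divr_gt0 // mulrCA divff ?mulr1 //.
Qed.

Lemma frac_lt (a b c d : R) : 0 < b -> 0 < d -> a * d < c * b -> a / b < c / d.
Proof. by move=> b0 d0 h; rewrite ltr_pdivrMr // mulrAC ltr_pdivlMr. Qed.

Lemma meas_post (a b k : R) : measurable_fun setT (fun x : R => a + k * (x - b)).
Proof.
apply: measurable_funD => //; apply: measurable_funM => //; exact: measurable_funB.
Qed.

Lemma meas_post' (a b k : R) : measurable_fun setT (fun x : R => x + (a + k * (x - b))).
Proof. apply: measurable_funD => //; exact: meas_post. Qed.

Lemma meas_post'' (a b k : R) : measurable_fun setT (fun x : R => (a + k * (x - b)) + x).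
Proof. apply: measurable_funD => //; exact: meas_post. Qed.

Lemma pay1E (mu1 mu2 s1 s2 r w1 w2 : R) : 0 <= w1 -> 0 <= w2 -> w1 + w2 = 1 ->
  (forall x, 0 <= x -> 0 <= posterior_mean_other mu1 s1 mu2 s2 r x) ->
  payoff_discover1 mu1 mu2 s1 s2 r w1 w2 =
  (w2%:E * normal_prob mu1 s1 [set x | (0 <= posterior_mean_other mu1 s1 mu2 s2 r x)%R]
   + w1%:E * normal_prob mu1 s1 [set x | (0 <= x + posterior_mean_other mu1 s1 mu2 s2 r x)%R])%E.
Proof.
move=> h1 h2 hw H; rewrite /payoff_discover1.
under eq_integral => x _ do rewrite (pv_eq _ _ _ _ h1 h2 hw (H x)).
apply: (int_step mu1 s1 w1 w2 (fun x => posterior_mean_other mu1 s1 mu2 s2 r x)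
  (fun x => x + posterior_mean_other mu1 s1 mu2 s2 r x)) => //;
  apply: meas_ge0; rewrite /posterior_mean_other; [exact: meas_post | exact: meas_post'].
Qed.

Lemma pay2E (mu1 mu2 s1 s2 r w1 w2 : R) : 0 <= w1 -> 0 <= w2 -> w1 + w2 = 1 ->
  (forall y, 0 <= posterior_mean_other mu2 s2 mu1 s1 r y -> 0 <= y) ->
  payoff_discover2 mu1 mu2 s1 s2 r w1 w2 =
  (w2%:E * normal_prob mu2 s2 [set y | (0 <= y)%R]
   + w1%:E * normal_prob mu2 s2 [set y | (0 <= posterior_mean_other mu2 s2 mu1 s1 r y + y)%R])%E.
Proof.
move=> h1 h2 hw H; rewrite /payoff_discover2.
under eq_integral => x _ do rewrite (pv_eq _ _ _ _ h1 h2 hw (H x)).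
apply: (int_step mu2 s2 w1 w2 (fun y => y)
  (fun y => posterior_mean_other mu2 s2 mu1 s1 r y + y)) => //;
  apply: meas_ge0; rewrite /posterior_mean_other; [exact: measurable_id | exact: meas_post''].
Qed.
End H.

Lemma fin1 {R : realType} (w1 w2 p1 p1b p2 p2b eA eB eL pk : R) : 0 < w1 -> 0 < w2 -> 0 <= p1b ->
  1 - p1 <= eA -> p2b <= eB -> pk * eL <= 1 - p2 ->
  w2 * eA < w2 * pk / 2 * eL -> w1 * eB < w2 * pk / 2 * eL ->
  w2 * p2 + w1 * p2b < w2 * p1 + w1 * p1b.
Proof.
move=> hw1 hw2 h0 b1 b2 b3 H1 H2.
have m1 := ler_wpM2l (ltW hw2) b1.
have m2 := ler_wpM2l (ltW hw1) b2.
have m3 := ler_wpM2l (ltW hw2) b3.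
have m4 : 0 <= w1 * p1b by exact: mulr_ge0 (ltW hw1) h0.
lra.
Qed.

Lemma fin2 {R : realType} (w1 w2 p1 p1b p2 p2b eA eB eL pk : R) : 0 < w1 -> 0 < w2 -> p1 <= 1 ->
  1 - p2 <= eA -> p1b <= eB -> pk * eL <= p2b ->
  w2 * eA < w1 * pk / 2 * eL -> w1 * eB < w1 * pk / 2 * eL ->
  w2 * p1 + w1 * p1b < w2 * p2 + w1 * p2b.
Proof.
move=> hw1 hw2 h0 b1 b2 b3 H1 H2.
have m1 := ler_wpM2l (ltW hw2) b1.
have m2 := ler_wpM2l (ltW hw1) b2.
have m3 := ler_wpM2l (ltW hw1) b3.
have m4 := ler_wpM2l (ltW hw2) h0.
lra.
Qed.

Theorem lemma1 (R : realType) (sig1 sig2 rho w1 w2 c : R)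
  (hsig1 : 0 < sig1) (hsig12 : sig1 < sig2)
  (hrho0 : 0 < rho) (hrho1 : rho < 1)
  (hw1 : 0 < w1) (hw2 : 0 < w2) (hw : w1 + w2 = 1)
  (hc0 : 0 <= c) (hc1 : c < 1) :
  (c_star sig1 sig2 rho < c < c_starstar sig1 sig2 rho ->
     exists mu_low : R, forall mu : R, 0 < mu -> mu_low < mu ->
       (payoff_discover2 (- mu) (c * mu) sig1 sig2 rho w1 w2
          < payoff_discover1 (- mu) (c * mu) sig1 sig2 rho w1 w2)%E)
  /\
  (c_starstar sig1 sig2 rho < c ->
     exists mu_bar : R, forall mu : R, 0 < mu -> mu_bar < mu ->
       (payoff_discover1 (- mu) (c * mu) sig1 sig2 rho w1 w2
          < payoff_discover2 (- mu) (c * mu) sig1 sig2 rho w1 w2)%E).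
Proof.
have sig2p : 0 < sig2 by lra.
have pk0 : 0 < normal_peak sig2 by rewrite normal_peak_gt0 // gt_eqF.
set pk := normal_peak sig2.
have k1p : 0 < rho * (sig2 / sig1) by rewrite mulr_gt0 // divr_gt0.
have k2p : 0 < rho * (sig1 / sig2) by rewrite mulr_gt0 // divr_gt0.
have cssp : 0 < c_starstar sig1 sig2 rho.
  by rewrite /c_starstar divr_gt0 // addr_gt0 // ?mulr_gt0 //.
have H1 : forall mu, 0 < mu -> forall x, 0 <= x ->
    0 <= posterior_mean_other (- mu) sig1 (c * mu) sig2 rho x.
  move=> mu mu0 x x0; rewrite /posterior_mean_other opprK.
  by apply: addr_ge0; [rewrite mulr_ge0 // ltW | rewrite mulr_ge0 // ?ltW //; lra].
have H2 : forall mu, 0 < mu -> forall y,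
    0 <= posterior_mean_other (c * mu) sig2 (- mu) sig1 rho y -> 0 <= y.
  move=> mu mu0 y; rewrite /posterior_mean_other => hy.
  have cm0 : 0 <= c * mu by rewrite mulr_ge0 // ltW.
  nra.
split.
- move=> /andP[hcs hcss].
  have cs0 : 0 < c_star sig1 sig2 rho.
    by rewrite /c_star divr_gt0 ?mulr_gt0 // addr_gt0 // ?mulr_gt0.
  have c0 : 0 < c by exact: lt_trans hcs.
  have hc2 : c * (rho * sig1 + 2 * sig2) < sig2.
    by move: hcss; rewrite /c_starstar ltr_pdivlMr // addr_gt0 // ?mulr_gt0.
  set gA := c / (rho * sig2).
  set gL := c / sig2.
  set hL := 2 / sig2.
  set gB := (1 - c) / (sig2 + rho * sig1).
  have gL0 : 0 <= gL by rewrite divr_ge0 // ltW.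
  have gLA : gL < gA by apply: frac_lt => //; rewrite ?mulr_gt0 //; have := mulr_gt0 c0 sig2p; nra.
  have gLB : gL < gB by apply: frac_lt => //; rewrite ?addr_gt0 ?mulr_gt0 //; nra.
  have [M1 HM1] := asym gA gL hL w2 (w2 * pk / 2) gL0 gLA ltac:(rewrite divr_gt0 ?mulr_gt0 //) (ltW hw2).
  have [M2 HM2] := asym gB gL hL w1 (w2 * pk / 2) gL0 gLB ltac:(rewrite divr_gt0 ?mulr_gt0 //) (ltW hw1).
  exists (Num.max M1 M2) => mu mu0; rewrite gt_max => /andP[hM1 hM2].
  have {}HM1 := HM1 mu hM1.
  have {}HM2 := HM2 mu hM2.
  rewrite (pay1E _ _ _ _ _ _ _ (ltW hw1) (ltW hw2) hw (H1 mu mu0)).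
  rewrite (pay2E _ _ _ _ _ _ _ (ltW hw1) (ltW hw2) hw (H2 mu mu0)).
  rewrite /posterior_mean_other.
  set k1 := rho * (sig2 / sig1).
  set k2 := rho * (sig1 / sig2).
  have k1p' : 0 < k1 := k1p.
  have k2p' : 0 < k2 := k2p.
  have mA1 : measurable [set x : R | (0 <= c * mu + k1 * (x - - mu))%R].
    by apply: meas_ge0; exact: meas_post.
  have mB1 : measurable [set x : R | (0 <= x + (c * mu + k1 * (x - - mu)))%R].
    by apply: meas_ge0; exact: meas_post'.
  have mA2 : measurable [set y : R | (0 <= y)%R].
    by apply: meas_ge0; exact: measurable_id.
  have mB2 : measurable [set y : R | (0 <= - mu + k2 * (y - c * mu) + y)%R].
    by apply: meas_ge0; exact: meas_post''.
  have [p1 [E1 [r1 C1]]] := prob_real (- mu) sig1 _ mA1.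
  have [p1b [E1b [r1b _]]] := prob_real (- mu) sig1 _ mB1.
  have [p2 [E2 [r2 C2]]] := prob_real (c * mu) sig2 _ mA2.
  have [p2b [E2b [r2b _]]] := prob_real (c * mu) sig2 _ mB2.
  rewrite E1 E1b E2 E2b -!EFinM -!EFinD lte_fin.
  have b1 : 1 - p1 <= expR (- (gA * mu) ^+ 2 / 2).
    have d0 : 0 <= gA * mu * sig1.
      by apply: mulr_ge0; [apply: mulr_ge0 | ]; apply: ltW => //; exact: le_lt_trans gL0 gLA.
    have hd : gA * mu * sig1 * k1 = c * mu.
      by rewrite /gA /k1; field; rewrite ?gt_eqF ?mulr_gt0.
    have := ub_left (- mu) sig1 (gA * mu * sig1) (~` [set x : R | (0 <= c * mu + k1 * (x - - mu))%R]) hsig1 (measurableC mA1) d0.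
    rewrite C1 mulfK ?gt_eqF // lee_fin; apply => x /= hx.
    have hx' : c * mu + k1 * (x - - mu) < 0 by rewrite ltNge; apply/negP.
    nra.
  have b2 : p2b <= expR (- (gB * mu) ^+ 2 / 2).
    have d0 : 0 <= gB * mu * sig2.
      by apply: mulr_ge0; [apply: mulr_ge0 | ]; apply: ltW => //; exact: le_lt_trans gL0 gLB.
    have hd : gB * mu * sig2 * (1 + k2) = (1 - c) * mu.
      by rewrite /gB /k2; field; rewrite ?gt_eqF ?addr_gt0 ?mulr_gt0.
    have := ub_right (c * mu) sig2 (gB * mu * sig2) _ sig2p mB2 d0.
    rewrite E2b mulfK ?gt_eqF // lee_fin; apply => y /= hy.
    nra.
  have b3 : pk * expR (- (gL * mu + hL) ^+ 2 / 2) <= 1 - p2.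
    have d0 : 0 <= c * mu + 1 by have := mulr_ge0 hc0 (ltW mu0); lra.
    have := lb_left (c * mu) sig2 (c * mu + 1) (~` [set y : R | (0 <= y)%R]) sig2p (measurableC mA2) d0.
    have -> : (c * mu + 1 + 1) / sig2 = gL * mu + hL.
      by rewrite /gL /hL; field; rewrite gt_eqF.
    rewrite C2 lee_fin; apply => y hy /=; lra.
  by apply: (fin1 _ _ _ _ _ _ _ _ _ _ hw1 hw2 _ b1 b2 b3 HM1 HM2); case/andP: r1b.
- move=> hcss.
  have c0 : 0 < c := lt_trans cssp hcss.
  have hc2 : sig2 < c * (rho * sig1 + 2 * sig2).
    by move: hcss; rewrite /c_starstar ltr_pdivrMr // addr_gt0 // ?mulr_gt0.
  set gA := c / sig2.
  set gB1 := (1 - c) / (sig1 + rho * sig2).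
  set gB := (1 - c) / (sig2 + rho * sig1).
  set hB := 1 / sig2.
  have gB0 : 0 <= gB.
    apply: divr_ge0; first lra.
    by apply: addr_ge0; [apply: ltW | apply: mulr_ge0; apply: ltW].
  have gBA : gB < gA by apply: frac_lt => //; rewrite ?addr_gt0 ?mulr_gt0 //; nra.
  have gBB1 : gB < gB1.
    apply: frac_lt => //; rewrite ?addr_gt0 ?mulr_gt0 //.
    have : 0 < (1 - c) * (sig2 - sig1) by rewrite mulr_gt0 //; lra.
    nra.
  have [M1 HM1] := asym gA gB hB w2 (w1 * pk / 2) gB0 gBA ltac:(rewrite divr_gt0 ?mulr_gt0 //) (ltW hw2).
  have [M2 HM2] := asym gB1 gB hB w1 (w1 * pk / 2) gB0 gBB1 ltac:(rewrite divr_gt0 ?mulr_gt0 //) (ltW hw1).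
  exists (Num.max M1 M2) => mu mu0; rewrite gt_max => /andP[hM1 hM2].
  have {}HM1 := HM1 mu hM1.
  have {}HM2 := HM2 mu hM2.
  rewrite (pay1E _ _ _ _ _ _ _ (ltW hw1) (ltW hw2) hw (H1 mu mu0)).
  rewrite (pay2E _ _ _ _ _ _ _ (ltW hw1) (ltW hw2) hw (H2 mu mu0)).
  rewrite /posterior_mean_other.
  set k1 := rho * (sig2 / sig1).
  set k2 := rho * (sig1 / sig2).
  have k1p' : 0 < k1 := k1p.
  have k2p' : 0 < k2 := k2p.
  have mA1 : measurable [set x : R | (0 <= c * mu + k1 * (x - - mu))%R].
    by apply: meas_ge0; exact: meas_post.
  have mB1 : measurable [set x : R | (0 <= x + (c * mu + k1 * (x - - mu)))%R].
    by apply: meas_ge0; exact: meas_post'.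
  have mA2 : measurable [set y : R | (0 <= y)%R].
    by apply: meas_ge0; exact: measurable_id.
  have mB2 : measurable [set y : R | (0 <= - mu + k2 * (y - c * mu) + y)%R].
    by apply: meas_ge0; exact: meas_post''.
  have [p1 [E1 [r1 C1]]] := prob_real (- mu) sig1 _ mA1.
  have [p1b [E1b [r1b _]]] := prob_real (- mu) sig1 _ mB1.
  have [p2 [E2 [r2 C2]]] := prob_real (c * mu) sig2 _ mA2.
  have [p2b [E2b [r2b _]]] := prob_real (c * mu) sig2 _ mB2.
  rewrite E1 E1b E2 E2b -!EFinM -!EFinD lte_fin.
  have b1 : 1 - p2 <= expR (- (gA * mu) ^+ 2 / 2).
    have hd : gA * mu * sig2 = c * mu by rewrite /gA; field; rewrite gt_eqF.
    have d0 : 0 <= gA * mu * sig2 by rewrite hd mulr_ge0 // ltW.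
    have := ub_left (c * mu) sig2 (gA * mu * sig2) (~` [set y : R | (0 <= y)%R]) sig2p (measurableC mA2) d0.
    rewrite C2 mulfK ?gt_eqF // lee_fin; apply => y /= hy.
    have hy' : y < 0 by rewrite ltNge; apply/negP.
    lra.
  have b2 : p1b <= expR (- (gB1 * mu) ^+ 2 / 2).
    have d0 : 0 <= gB1 * mu * sig1.
      by apply: mulr_ge0; [apply: mulr_ge0 | ]; apply: ltW => //; exact: le_lt_trans gB0 gBB1.
    have hd : gB1 * mu * sig1 * (1 + k1) = (1 - c) * mu.
      by rewrite /gB1 /k1; field; rewrite ?gt_eqF ?addr_gt0 ?mulr_gt0.
    have := ub_right (- mu) sig1 (gB1 * mu * sig1) _ hsig1 mB1 d0.
    rewrite E1b mulfK ?gt_eqF // lee_fin; apply => x /= hx.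
    nra.
  have b3 : pk * expR (- (gB * mu + hB) ^+ 2 / 2) <= p2b.
    have d0 : 0 <= gB * mu * sig2 by apply: mulr_ge0; [apply: mulr_ge0 | ]; rewrite // ltW.
    have hd : gB * mu * sig2 * (1 + k2) = (1 - c) * mu.
      by rewrite /gB /k2; field; rewrite ?gt_eqF ?addr_gt0 ?mulr_gt0.
    have := lb_right (c * mu) sig2 (gB * mu * sig2) _ sig2p mB2 d0.
    have -> : (gB * mu * sig2 + 1) / sig2 = gB * mu + hB.
      by rewrite /hB; field; rewrite gt_eqF.
    rewrite E2b lee_fin; apply => y hy /=.
    nra.
  by apply: (fin2 _ _ _ _ _ _ _ _ _ _ hw1 hw2 _ b1 b2 b3 HM1 HM2); case/andP: r1.
Qed.
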